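(* Let $X$ be a uniformizable Alexandroff space. Then $X$ is a functional Alexandroff space if and only if $V(x)$ is finite for every $x\in X$.
   Context: For a topological space $X$ and $a\in X$, $V(a):=\bigcap\{U: U\text{ open}, a\in U\}$; $X$ is Alexandroff if every $V(a)$ is open. $X$ is uniformizable if its topology is induced by some uniform structure on $X$. For a map $f:X\to X$ and $a\in X$ let $V_f(a):=\bigcup_{n\ge 0}f^{-n}(a)=\{x\in X:\exists n\ge0,\ f^n(x)=a\}$. The sets $\{V_f(a):a\in X\}$ form a basis of a topology on $X$ (the functional Alexandroff topology associated to $f$), in which $V_f(a)$ is the smallest open neighbourhood of $a$. A topological space $X$ is a functional Alexandroff space if there is $f:X\to X$ whose functional Alexandroff topology equals the topology of $X$. *)

(* Defs.v *)
From mathcomp Require Import all_boot all_order.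
From mathcomp Require Import all_classical topology.
Set Implicit Arguments. Unset Strict Implicit. Unset Printing Implicit Defensive.
Local Open Scope classical_set_scope.

Definition minnbhd (T : topologicalType) (a : T) : set T :=
  \bigcap_(U in [set U : set T | open U /\ U a]) U.

Definition alexandroff (T : topologicalType) : Prop :=
  forall a : T, open (minnbhd a).

Definition rel_comp (X : Type) (U V : set (X * X)) : set (X * X) :=
  [set xz | exists y, U (xz.1, y) /\ V (y, xz.2)].

Definition is_uniformity (X : Type) (E : set (set (X * X))) : Prop :=
  E setT /\
    [/\ (forall U V, E U -> U `<=` V -> E V),
      (forall U V, E U -> E V -> E (U `&` V)),
      (forall U, E U -> forall x, U (x, x)),
      (forall U, E U -> E [set xy | U (xy.2, xy.1)]) &
      (forall U, E U -> exists2 V, E V & rel_comp V V `<=` U)].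

Definition uniform_open (X : Type) (E : set (set (X * X))) (A : set X) : Prop :=
  forall x, A x -> exists2 U, E U & [set y | U (x, y)] `<=` A.

Definition uniformizable (T : topologicalType) : Prop :=
  exists E : set (set (T * T)),
    is_uniformity E /\ forall A : set T, open A <-> uniform_open E A.

Definition Vf (X : Type) (f : X -> X) (a : X) : set X :=
  [set x | exists n : nat, iter n f x = a].

(* Open sets of the topology generated by the basis { V_f(a) : a in X }. *)
Definition fun_alex_open (X : Type) (f : X -> X) (A : set X) : Prop :=
  forall x, A x -> exists a, Vf f a x /\ Vf f a `<=` A.

Definition functional_alexandroff (T : topologicalType) : Prop :=
  exists f : T -> T, forall A : set T, open A <-> fun_alex_open f A.

(* Main.v *)
Require Import Defs.
From mathcomp Require Import all_boot all_order.
From mathcomp Require Import all_classical topology.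
From mathcomp Require Import finmap.
Local Open Scope classical_set_scope.

Lemma mn_self (T : topologicalType) (x : T) : minnbhd x x.
Proof. by move=> U []. Qed.

Lemma mn_sub (T : topologicalType) (x : T) (A : set T) : open A -> A x -> minnbhd x `<=` A.
Proof. by move=> oA Ax y; apply. Qed.

Lemma mn_trans (T : topologicalType) (x y z : T) : minnbhd x y -> minnbhd y z -> minnbhd x z.
Proof. move=> hy hz U [oU Ux]; apply: hz; split=> //; exact: hy. Qed.

Lemma mn_sym {T : topologicalType} {x y : T} : uniformizable T -> minnbhd x y -> minnbhd y x.
Proof.
move=> [E [[ET [Eup EI Erefl Einv Ecomp]] HE]] hy A [oA Ay].
have [W EW WA] := (proj1 (HE A) oA) y Ay.
pose O := [set z | exists2 U, E U & forall w, U (z, w) -> W (w, x)].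
have oO : open O.
  apply/HE => z [U EU HU].
  have [V EV VU] := Ecomp U EU.
  exists V => // w Vzw; exists V => // w' Vww'.
  by apply: HU; apply: VU; exists w.
have Ox : O x.
  exists [set xy | W (xy.2, xy.1)]; first exact: Einv.
  by move=> w.
have [U EU HU] := hy O (conj oO Ox).
by apply: WA; apply: HU; apply: Erefl.
Qed.

Lemma iter_per {X : Type} {f : X -> X} {x : X} {p} m : iter p f x = x -> iter m f x = iter (m %% p) f x.
Proof.
move=> hp; rewrite {1}(divn_eq m p) addnC iterD.
suff -> : iter (m %/ p * p) f x = x by [].
elim: (m %/ p) => [|q IH] //=; by rewrite mulSn iterD IH hp.
Qed.

Lemma forward (T : topologicalType) : uniformizable T ->
  functional_alexandroff T -> forall x : T, finite_set (minnbhd x).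
Proof.
move=> hu [f hf].
have oV : forall a, open (Vf f a).
  by move=> a; apply: (proj2 (hf _)) => x hx; exists a; split.
have sub1 : forall x, minnbhd x `<=` Vf f x.
  move=> x; apply: mn_sub => //; by exists 0.
have sub2 : forall x y, Vf f x y -> minnbhd x y.
  move=> x y [n hn] A [oA Ax].
  have [a [[k hk] aA]] := (proj1 (hf A) oA) x Ax.
  by apply: aA; exists (k + n); rewrite iterD hn.
move=> x.
have key : forall y, minnbhd x y -> exists m n, iter m f x = y /\ iter n f y = x.
  move=> y hy; have [n hn] := sub1 _ _ hy.
  have [m hm] := sub1 _ _ (mn_sym hu hy).
  by exists m, n.
have [[p [p0 hp]]|np] := pselect (exists p, 0 < p /\ iter p f x = x).
  apply: (sub_finite_set (B := (fun k => iter k f x) @` `I_p)); last first.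
    by apply: finite_image; apply: finite_II.
  move=> y /key [m [n [hm hn]]]; exists (m %% p); first by rewrite /= ltn_mod.
  by rewrite -(iter_per m hp).
apply: (sub_finite_set (B := [set x])); last exact: finite_set1.
move=> y /key [m [n [hm hn]]].
case: m hm => [|m] hm; first by rewrite -hm.
exfalso; apply: np; exists (n + m.+1); split; first by rewrite addnS.
by rewrite iterD hm.
Qed.

Lemma orbit_cyc {X : eqType} (s : seq X) (f : X -> X) (x : X) :
  uniq s -> x \in s ->
  (forall y, y \in s -> f y = nth y s ((index y s).+1 %% size s)) ->
  forall k, iter k f x = nth x s ((index x s + k) %% size s).
Proof.
move=> us xs hf.
have sz : 0 < size s by case: s xs us hf.
elim=> [|k IH] /=; first by rewrite addn0 modn_small ?index_mem ?nth_index.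
have jlt : (index x s + k) %% size s < size s by rewrite ltn_mod.
rewrite IH hf ?mem_nth // index_uniq //.
rewrite (set_nth_default x); last by rewrite ltn_mod.
by rewrite -addn1 modnDml addn1 addnS.
Qed.

Lemma mn_eq {T : topologicalType} {x y : T} : uniformizable T -> minnbhd x y -> minnbhd y = minnbhd x.
Proof.
move=> hu hy; apply/seteqP; split => z hz.
  exact: mn_trans hy hz.
exact: mn_trans (mn_sym hu hy) hz.
Qed.

Lemma backward (T : topologicalType) : uniformizable T -> alexandroff T ->
  (forall x : T, finite_set (minnbhd x)) -> functional_alexandroff T.
Proof.
move=> hu ha hfin.
pose s (x : T) : seq T := enum_fset (fset_set (minnbhd x)).
have ins : forall x y, (y \in s x) <-> minnbhd x y.
  move=> x y; rewrite /s -[_ \in enum_fset _]/(y \in fset_set (minnbhd x)).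
  by rewrite in_fset_set //; split => [/set_mem|/mem_set].
have us : forall x, uniq (s x) by move=> x; exact: fset_uniq.
pose f (y : T) := nth y (s y) ((index y (s y)).+1 %% size (s y)).
have seq_s : forall x y, minnbhd x y -> s y = s x.
  by move=> x y hy; rewrite /s (mn_eq hu hy).
have orb : forall x k, iter k f x = nth x (s x) ((index x (s x) + k) %% size (s x)).
  move=> x; apply: orbit_cyc => //; first by apply/ins; apply: mn_self.
  by move=> y /ins hy; rewrite /f (seq_s _ _ hy).
have sz : forall x, 0 < size (s x).
  move=> x; have xs : x \in s x by apply/ins; apply: mn_self.
  by move: xs; case: (s x).
have VE : forall a, Vf f a = minnbhd a.
  move=> a; apply/seteqP; split => y.
    move=> [n hn]; apply: mn_sym hu _; apply/ins; rewrite -hn orb mem_nth //.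
    by rewrite ltn_mod.
  move=> hy; have ha' : a \in s y by apply/ins; exact: mn_sym hu hy.
  have yi : index y (s y) < size (s y) by rewrite index_mem; apply/ins; apply: mn_self.
  exists (size (s y) - index y (s y) + index a (s y)); rewrite orb.
  rewrite addnA subnKC; last exact: ltnW.
  by rewrite modnDl modn_small ?index_mem // nth_index.
exists f => A; split.
  move=> oA x Ax; exists x; rewrite VE; split; first exact: mn_self.
  exact: mn_sub.
move=> hA; rewrite openE => x Ax.
have [a [hxa haA]] := hA x Ax.
rewrite VE in hxa haA.
rewrite /interior nbhsE; exists (minnbhd a) => //; split => //; exact: ha.
Qed.

Theorem mainTheorem5 (T : topologicalType) :
  uniformizable T -> alexandroff T ->
  (functional_alexandroff T <-> forall x : T, finite_set (minnbhd x)).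
Proof.
move=> hu ha; split; [exact: forward | exact: backward].
Qed.
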